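(* Let $D$ be a strongly connected digraph containing at least one cycle, with girth $g$. Let $k$ and $p$ be integers with $k\ge g-1\ge p\ge 1$, and put $\hat k=\lceil k/p\rceil\, p$. If $D$ contains no cycle whose length is congruent to $r$ modulo $\hat k$ for any $r\in\{-p+2,-p+3,\ldots,0,\ldots,p\}$, then $\chi_A(D)\le \lceil k/p\rceil$.
   Context: Digraphs are finite and loopless; paths and cycles are directed. The girth of a digraph is the length of a shortest directed cycle. A set of vertices is acyclic if the subdigraph it induces contains no directed cycle. The dichromatic number $\chi_A(D)$ is the minimum $k$ such that $V(D)$ can be colored with $k$ colors so that every color class is acyclic. A digraph is strongly connected if for every ordered pair of distinct vertices $u,v$ there is a directed $uv$-path. *)

(* Defs.v *)
From HB Require Import structures.
From mathcomp Require Import all_boot all_order all_algebra.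
Set Implicit Arguments. Unset Strict Implicit. Unset Printing Implicit Defensive.

Definition loopless (V : finType) (e : rel V) : Prop := forall x, ~~ e x x.

(* A directed cycle: a nonempty duplicate-free sequence [v0; ...; v_{L-1}]
   with arcs v_i -> v_{i+1} and v_{L-1} -> v0.  Its length is size s. *)
Definition dicycle (V : finType) (e : rel V) (s : seq V) : bool :=
  [&& 0 < size s, uniq s & cycle e s].

Definition strongly_connected (V : finType) (e : rel V) : Prop :=
  forall u v : V, connect e u v.

Definition is_girth (V : finType) (e : rel V) (g : nat) : Prop :=
  (exists s, dicycle e s /\ size s = g) /\
  (forall s, dicycle e s -> g <= size s).

Definition acyclic_set (V : finType) (e : rel V) (A : {pred V}) : Prop :=
  forall s, dicycle e s -> ~ all (mem A) s.

Definition dichromatic_le (V : finType) (e : rel V) (c : nat) : Prop :=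
  exists f : V -> 'I_c, forall i : 'I_c, acyclic_set e [pred x | f x == i].

Definition ceil_div (k p : nat) : nat := (k + p.-1) %/ p.

(* Main.v *)
Require Import Defs.
From HB Require Import structures.
From mathcomp Require Import all_boot all_order all_algebra.
From mathcomp Require Import zify.
Import Order.TTheory GRing.Theory Num.Theory.
Set Implicit Arguments. Unset Strict Implicit.

Lemma path_drop_nth (T : Type) (e : rel T) (x : T) (p : seq T) (j : nat) :
  path e x p -> path e (nth x (x :: p) j) (drop j p).
Proof.
elim: p x j => [|y p IH] x [|j] //= /andP[exy hp].
case: (ltnP j (size (y :: p))) => hj.
  by rewrite (set_nth_default y x hj); exact: IH.
by rewrite drop_oversize //; apply: ltnW.

Qed.

Lemma last_drop_nth (T : Type) (x : T) (p : seq T) (j : nat) :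
  j <= size p -> last (nth x (x :: p) j) (drop j p) = last x p.
Proof.
elim: p x j => [|y p IH] x [|j] //= hj.
rewrite -(IH y j hj) (set_nth_default y x) //.
Qed.

Lemma stack_cycle (V : finType) (e : rel V) (x0 : V) (ss : seq V) (c : V) (j : nat) :
  path e x0 ss -> uniq (x0 :: rcons ss c) -> e (last x0 ss) c ->
  j < size (x0 :: ss) -> e c (nth x0 (x0 :: ss) j) ->
  exists s, dicycle e s /\ size s + j = size (x0 :: ss) + 1.
Proof.
move=> hp hu hl hj hc.
set p := rcons ss c.
have hpp : path e x0 p by rewrite /p rcons_path hp hl.
have hjp : j < size (x0 :: p) by rewrite /p /= size_rcons ltnS ltnW.
have hyn : nth x0 (x0 :: p) j = nth x0 (x0 :: ss) j.
  by rewrite /p -rcons_cons nth_rcons hj.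
exists (drop j (x0 :: p)); split; last first.
  by rewrite size_drop /p /= size_rcons; move: hj => /=; lia.
rewrite /dicycle size_drop.
rewrite subn_gt0 hjp drop_uniq //=.
rewrite (drop_nth x0 hjp) /= rcons_path path_drop_nth //=.
rewrite last_drop_nth; last by move: hjp => /=.
by rewrite /p last_rcons -hyn in hc *.
Qed.

Definition dfs_spec (V : finType) (e : rel V) (U : {set V}) (x0 : V) (ss : seq V)
  (B : nat) (R : {set V}) (f pi : V -> nat) (m : nat) : Prop :=
  [/\ R \subset U,
      (forall u v, u \in R -> v \in U -> e u v -> v \in R),
      (forall v, v \in U -> e (last x0 ss) v -> v \in R),
      B <= m & (forall u, u \in R -> B <= pi u < m)] /\
  ((forall u v, u \in R -> v \in R -> e u v -> pi u <= pi v ->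
          exists s, dicycle e s /\ size s + f v = f u + 1) /\
      (forall u j, u \in R -> j < size (x0 :: ss) -> e u (nth x0 (x0 :: ss) j) ->
          exists s, dicycle e s /\ size s + j = f u + 1)).

Lemma dfs_lemma (V : finType) (e : rel V) : loopless e ->
  forall n (U : {set V}), #|U| <= n -> forall x0 ss B,
  path e x0 ss -> uniq (x0 :: ss) -> (forall y, y \in x0 :: ss -> y \notin U) ->
  exists R f pi m, dfs_spec e U x0 ss B R f pi m.
Proof.
move=> hloop; elim=> [|n IH] U hU x0 ss B hp hu hd.
  exists set0, (fun _ => 0), (fun _ => 0), B; split; first split => //.
  - exact: sub0set.
  - by move=> u; rewrite inE.
  - by move=> v; move: hU; rewrite leqn0 => /eqP/cards0_eq ->; rewrite inE.
  - by move=> u; rewrite inE.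
  - by split=> u; rewrite inE.
case: (pickP [pred c | (c \in U) && e (last x0 ss) c]); last first.
  move=> hnone.
  exists set0, (fun _ => 0), (fun _ => 0), B; split; first split => //.
  - exact: sub0set.
  - by move=> u; rewrite inE.
  - by move=> v vU ev; move: (hnone v); rewrite /= vU ev.
  - by move=> u; rewrite inE.
  - by split=> u; rewrite inE.
move=> c /andP[cU etc].
have cs : c \notin x0 :: ss by apply/negP => /hd; rewrite cU.
set U1 := U :\ c.
have hU1 : #|U1| <= n.
  by move: (cardsD1 c U); rewrite cU /= add1n => hc; rewrite -ltnS -hc.
have hp1 : path e x0 (rcons ss c) by rewrite rcons_path hp etc.
have hu1 : uniq (x0 :: rcons ss c) by rewrite -rcons_cons rcons_uniq cs hu.
have hd1 : forall y, y \in x0 :: rcons ss c -> y \notin U1.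
  move=> y; rewrite -rcons_cons mem_rcons inE => /orP[/eqP->|ys].
    by rewrite !inE eqxx.
  by rewrite !inE negb_and (hd y ys) orbT.
have [R1 [f1 [pi1 [m1 [[sR1 cl1 tl1 Bm1 rg1] [cy1 st1]]]]]] :=
  IH U1 hU1 x0 (rcons ss c) B hp1 hu1 hd1.
rewrite last_rcons in tl1.
set U2 := U :\: (c |: R1).
have hU2 : #|U2| <= n.
  apply: leq_trans hU1; apply: subset_leq_card; apply/subsetP => x.
  by rewrite !inE negb_or => /andP[/andP[-> _] ->].
have hd2 : forall y, y \in x0 :: ss -> y \notin U2.
  by move=> y /hd; rewrite !inE => /negbTE ->; rewrite andbF.
have [R2 [f2 [pi2 [m2 [[sR2 cl2 tl2 Bm2 rg2] [cy2 st2]]]]]] :=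
  IH U2 hU2 x0 ss m1.+1 hp hu hd2.
have cR1 : c \notin R1.
  by apply/negP => /(subsetP sR1); rewrite !inE eqxx.
have R2U2 : forall x, x \in R2 -> x \in U2 by apply/subsetP.
have R1U1 : forall x, x \in R1 -> x \in U1 by apply/subsetP.
have R2n : forall x, x \in R2 -> (x != c) && (x \notin R1).
  by move=> x /R2U2; rewrite !inE negb_or => /andP[/andP[-> ->] _].
have split3 : forall v, v \in U -> [\/ v = c, v \in R1 | v \in U2].
  move=> v vU; case: (eqVneq v c) => [->|vc]; first by constructor 1.
  case vR1: (v \in R1); first by constructor 2.
  by constructor 3; rewrite !inE (negbTE vc) vR1 vU.
exists (c |: (R1 :|: R2)),
  (fun x => if x \in R1 then f1 x else if x == c then size (x0 :: ss) else f2 x),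
  (fun x => if x \in R1 then pi1 x else if x == c then m1 else pi2 x), m2.
(split; first split); last split.
- apply/subsetP => x; rewrite !inE => /or3P[/eqP->//|/R1U1|/R2U2]; rewrite !inE;
    by case/andP.
- move=> u v; rewrite !inE => uR vU euv.
  case: (split3 v vU) => [->|->|vU2]; rewrite ?eqxx ?orbT //.
  apply/orP; right; apply/orP; right.
  case/or3P: uR => [/eqP uc|uR1|uR2].
  + have : v \in R1 by apply: tl1; [move: vU2; rewrite !inE => /andP[]; rewrite negb_or => /andP[-> _] -> | rewrite -uc].
    by move: vU2; rewrite !inE => /andP[]; rewrite negb_or => /andP[_ /negbTE ->].
  + have : v \in R1 by apply: cl1 uR1 _ euv; move: vU2; rewrite !inE => /andP[]; rewrite negb_or => /andP[-> _] ->.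
    by move: vU2; rewrite !inE => /andP[]; rewrite negb_or => /andP[_ /negbTE ->].
  + exact: cl2 uR2 vU2 euv.
- move=> v vU ev; rewrite !inE.
  case: (split3 v vU) => [->|->|vU2]; rewrite ?eqxx ?orbT //.
  by rewrite (tl2 v vU2 ev) !orbT.
- by apply: leq_trans Bm1 _; apply: leq_trans Bm2.
- move=> u; rewrite !inE => /or3P[/eqP->|uR1|uR2].
  + by rewrite (negbTE cR1) eqxx Bm1 /=; apply: leq_trans Bm2.
  + rewrite uR1; case/andP: (rg1 u uR1) => -> /= h; apply: leq_trans h _.
    by apply: leq_trans Bm2; apply: leqW.
  + case/andP: (R2n u uR2) => /negbTE -> /negbTE ->.
    case/andP: (rg2 u uR2) => h ->; rewrite andbT.
    by apply: leq_trans Bm1 _; apply: leq_trans h; apply: leqW.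
- move=> u v; rewrite !inE => uR vR euv.
  case/or3P: uR => [/eqP uc|uR1|uR2].
  + subst u; rewrite (negbTE cR1) eqxx.
    case/or3P: vR => [/eqP vc|vR1|vR2].
    * by subst v; move: (hloop c); rewrite euv.
    * by rewrite vR1; case/andP: (rg1 v vR1) => _ h /(leq_trans h); rewrite ltnn.
    * exfalso; case/andP: (R2n v vR2) => vc /negP; apply; apply: tl1 euv.
      by rewrite !inE vc; move: (R2U2 v vR2); rewrite !inE => /andP[_ ->].
  + rewrite uR1.
    case/or3P: vR => [/eqP vc|vR1|vR2].
    * subst v; rewrite (negbTE cR1) eqxx => _.
      have := st1 u (size (x0 :: ss)) uR1.
      move=> h; apply: h; first by rewrite /= size_rcons.
      by rewrite /= nth_rcons ltnn eqxx.
    * by rewrite vR1; apply: cy1.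
    * exfalso; case/andP: (R2n v vR2) => vc /negP; apply; apply: cl1 uR1 _ euv.
      by rewrite !inE vc; move: (R2U2 v vR2); rewrite !inE => /andP[_ ->].
  + case/andP: (R2n u uR2) => /negbTE uc /negbTE uR1; rewrite uR1 uc.
    case/andP: (rg2 u uR2) => h1 _.
    case/or3P: vR => [/eqP vc|vR1|vR2].
    * by subst v; rewrite (negbTE cR1) eqxx => /(leq_trans h1); rewrite ltnn.
    * rewrite vR1; case/andP: (rg1 v vR1) => _ h2 h3.
      by have := leq_trans h1 (leq_trans h3 (ltnW h2)); rewrite ltnn.
    * case/andP: (R2n v vR2) => /negbTE vc /negbTE vR1; rewrite vR1 vc.
      exact: cy2.
- move=> u j; rewrite !inE => uR hj.
  case/or3P: uR => [/eqP uc|uR1|uR2].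
  + subst u; rewrite (negbTE cR1) eqxx => h.
    exact: (stack_cycle hp hu1 etc hj h).
  + rewrite uR1 => h; apply: st1 => //.
      by move: hj; rewrite /= size_rcons; apply: leqW.
    by rewrite -rcons_cons nth_rcons hj.
  + case/andP: (R2n u uR2) => /negbTE uc /negbTE uR1; rewrite uR1 uc.
    exact: st2.
Qed.

Lemma top_lemma (V : finType) (e : rel V) : loopless e ->
  forall n (U : {set V}), #|U| <= n -> forall B,
  exists (f pi : V -> nat) m, B <= m /\ (forall u, u \in U -> B <= pi u < m) /\
    (forall u v, u \in U -> v \in U -> e u v -> pi u <= pi v ->
          exists s, dicycle e s /\ size s + f v = f u + 1).
Proof.
move=> hloop; elim=> [|n IH] U hU B.
  exists (fun _ => 0), (fun _ => 0), B; split => //.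
  by move: hU; rewrite leqn0 => /eqP/cards0_eq ->; split=> u; rewrite inE.
case: (set_0Vmem U) => [->|[r rU]].
  by exists (fun _ => 0), (fun _ => 0), B; split => //; split=> u; rewrite inE.
set U1 := U :\ r.
have hU1 : #|U1| <= n.
  by move: (cardsD1 r U); rewrite rU /= add1n => hc; rewrite -ltnS -hc.
have hd1 : forall y, y \in [:: r] -> y \notin U1.
  by move=> y; rewrite inE => /eqP->; rewrite !inE eqxx.
have [R1 [f1 [pi1 [m1 [[sR1 cl1 tl1 Bm1 rg1] [cy1 st1]]]]]] :=
  @dfs_lemma V e hloop n U1 hU1 r [::] B (erefl true) (erefl true) hd1.
rewrite /= in tl1.
set U2 := U :\: (r |: R1).
have hU2 : #|U2| <= n.
  apply: leq_trans hU1; apply: subset_leq_card; apply/subsetP => x.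
  by rewrite !inE negb_or => /andP[/andP[-> _] ->].
have [f2 [pi2 [m2 [Bm2 [rg2 cy2]]]]] := IH U2 hU2 m1.+1.
have rR1 : r \notin R1.
  by apply/negP => /(subsetP sR1); rewrite !inE eqxx.
have R1U1 : forall x, x \in R1 -> x \in U1 by apply/subsetP.
have split3 : forall v, v \in U -> [\/ v = r, v \in R1 | v \in U2].
  move=> v vU; case: (eqVneq v r) => [->|vr]; first by constructor 1.
  case vR1: (v \in R1); first by constructor 2.
  by constructor 3; rewrite !inE (negbTE vr) vR1 vU.
have U2n : forall x, x \in U2 -> (x != r) && (x \notin R1).
  by move=> x; rewrite !inE negb_or => /andP[/andP[-> ->] _].
have U2U1 : forall x, x \in U2 -> x \in U1.
  by move=> x; rewrite !inE negb_or => /andP[/andP[-> _] ->].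
exists (fun x => if x \in R1 then f1 x else if x == r then 0 else f2 x),
  (fun x => if x \in R1 then pi1 x else if x == r then m1 else pi2 x), m2.
split; first by apply: leq_trans Bm1 _; apply: leq_trans Bm2.
split.
- move=> u uU; case: (split3 u uU) => [->|uR1|uU2].
  + by rewrite (negbTE rR1) eqxx Bm1 /=; apply: leq_trans Bm2.
  + rewrite uR1; case/andP: (rg1 u uR1) => -> /= h; apply: leq_trans h _.
    by apply: leq_trans Bm2; apply: leqW.
  + case/andP: (U2n u uU2) => /negbTE -> /negbTE ->.
    case/andP: (rg2 u uU2) => h ->; rewrite andbT.
    by apply: leq_trans Bm1 _; apply: leq_trans h; apply: leqW.
- move=> u v uU vU euv.
  case: (split3 u uU) => [uc|uR1|uU2].
  + subst u; rewrite (negbTE rR1) eqxx.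
    case: (split3 v vU) => [vc|vR1|vU2].
    * by subst v; move: (hloop r); rewrite euv.
    * by rewrite vR1; case/andP: (rg1 v vR1) => _ h /(leq_trans h); rewrite ltnn.
    * exfalso; case/andP: (U2n v vU2) => vc /negP; apply; apply: tl1 euv.
      exact: U2U1.
  + rewrite uR1.
    case: (split3 v vU) => [vc|vR1|vU2].
    * subst v; rewrite (negbTE rR1) eqxx => _.
      have := st1 u 0 uR1 (erefl true) euv.
      by [].
    * by rewrite vR1; apply: cy1.
    * exfalso; case/andP: (U2n v vU2) => vc /negP; apply; apply: cl1 uR1 _ euv.
      exact: U2U1.
  + case/andP: (U2n u uU2) => /negbTE uc /negbTE uR1; rewrite uR1 uc.
    case/andP: (rg2 u uU2) => h1 _.
    case: (split3 v vU) => [vc|vR1|vU2].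
    * by subst v; rewrite (negbTE rR1) eqxx => /(leq_trans h1); rewrite ltnn.
    * rewrite vR1; case/andP: (rg1 v vR1) => _ h2 h3.
      by have := leq_trans h1 (leq_trans h3 (ltnW h2)); rewrite ltnn.
    * case/andP: (U2n v vU2) => /negbTE vc /negbTE vR1; rewrite vR1 vc.
      exact: cy2.
Qed.

Theorem theorem2 (V : finType) (e : rel V) (g k p : nat) :
  loopless e ->
  strongly_connected e ->
  is_girth e g ->
  (p <= g.-1 <= k)%N -> (1 <= p)%N ->
  (forall s : seq V, dicycle e s ->
     forall r : int, (2%:Z - p%:Z <= r)%R -> (r <= p%:Z)%R ->
       ~ ((size s)%:Z = r %[mod ((ceil_div k p * p)%N)%:Z])%Z) ->
  dichromatic_le e (ceil_div k p).
Proof.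
move=> hloop _ _ /andP[hpg hgk] hp1 hcyc.
have hpk : p <= k by apply: leq_trans hpg hgk.
set K := ceil_div k p.
have Kpos : 0 < K.
  by rewrite /K /ceil_div divn_gt0 //; lia.
set kh := (K * p)%N.
have khpos : 0 < kh by rewrite muln_gt0 Kpos hp1.
have [f [pi [m [_ [_ key]]]]] := @top_lemma V e hloop #|[set: V]| [set: V] (leqnn _) 0.
have col : forall x, (f x %% kh) %/ p < K.
  by move=> x; rewrite ltn_divLR // ltn_pmod.
exists (fun x => Ordinal (col x)).
move=> i s ds hall.
case: s ds hall => [|a s'] ds hall; first by case/andP: ds.
have ains : a \in a :: s' by rewrite inE eqxx.
case: (arg_minnP pi ains) => u us umin.
case/and3P: ds => _ _ hcy.
set v := next (a :: s') u.
have euv : e u v := next_cycle hcy us.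
have vs : v \in a :: s' by rewrite mem_next.
have [s2 [ds2 hsz]] := key u v (in_setT u) (in_setT v) euv (umin v vs).
have hu := allP hall u us; have hv := allP hall v vs.
rewrite /= in hu hv.
have hq : (f u %% kh) %/ p = (f v %% kh) %/ p.
  by move/eqP: hu => hu; move/eqP: hv => hv; rewrite -[LHS]/(val (Ordinal (col u))) hu -hv.
apply: (hcyc s2 ds2 ((f u %% kh)%:Z - (f v %% kh)%:Z + 1)%R).
- have h1 := divn_eq (f u %% kh) p; have h2 := divn_eq (f v %% kh) p.
  have h3 := ltn_pmod (f u %% kh) hp1; have h4 := ltn_pmod (f v %% kh) hp1.
  rewrite hq in h1.
  move: h1 h2 h3 h4; move: ((f v %% kh) %/ p * p)%N => Q.
  move: ((f u %% kh) %% p)%N ((f v %% kh) %% p)%N => a1 b1.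
  move: (f u %% kh)%N (f v %% kh)%N => A Bv.
  lia.
- have h1 := divn_eq (f u %% kh) p; have h2 := divn_eq (f v %% kh) p.
  have h3 := ltn_pmod (f u %% kh) hp1; have h4 := ltn_pmod (f v %% kh) hp1.
  rewrite hq in h1.
  move: h1 h2 h3 h4; move: ((f v %% kh) %/ p * p)%N => Q.
  move: ((f u %% kh) %% p)%N ((f v %% kh) %% p)%N => a1 b1.
  move: (f u %% kh)%N (f v %% kh)%N => A Bv.
  lia.
- rewrite -/K -/kh.
  have E : ((size s2)%:Z = ((f u %/ kh)%N%:Z - (f v %/ kh)%N%:Z) * kh%:Z
                           + ((f u %% kh)%N%:Z - (f v %% kh)%N%:Z + 1))%R.
    have h1 := divn_eq (f u) kh; have h2 := divn_eq (f v) kh.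
    rewrite mulrBl -!PoszM.
    move: hsz h1 h2; move: (f u %/ kh * kh)%N (f v %/ kh * kh)%N => X Y.
    move: (f u %% kh)%N (f v %% kh)%N => A Bv.
    move: (f u) (f v) => F G.
    lia.
  by rewrite E modzMDl.
Qed.
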